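(* Let $\mathbf x\in\mathbb R^p_+$ and let $x_i,x_j$ be two of its components with $x_i>x_j$. Let $\varepsilon\in(0,(x_i-x_j)/2)$ and let $\mathbf z\in\mathbb R^p_+$ be defined by $z_i=x_i-\varepsilon$, $z_j=x_j+\varepsilon$, and $z_k=x_k$ for $k\ne i,j$. Let $\mathbf w$ satisfy $w_1\ge w_2\ge\cdots\ge w_p\ge0$, and let $\Delta=\min\{w_l-w_{l+1}: l=1,\dots,p-1\}$. Then $$\Omega_{\mathbf w}(\mathbf x)-\Omega_{\mathbf w}(\mathbf z)\ge\Delta\,\varepsilon.$$
   Context: $\Omega_{\mathbf w}(\mathbf x)=\sum_{i=1}^p w_i|x|_{[i]}$, where $|x|_{[i]}$ denotes the $i$-th largest component of $\mathbf x$ in magnitude. *)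

(* Defs.v *)
From HB Require Import structures.
From mathcomp Require Import all_boot all_order all_algebra.
Set Implicit Arguments. Unset Strict Implicit. Unset Printing Implicit Defensive.
Import Order.TTheory GRing.Theory Num.Theory.
Local Open Scope ring_scope.

(* Vectors of R^p are functions 'I_p -> R; paper index l (1-based) is l-1 here. *)

Definition sorted_abs (R : realDomainType) (p : nat) (x : 'I_p -> R) : seq R :=
  sort (fun a b : R => b <= a) [seq `|x k| | k <- enum 'I_p].

Definition Omega (R : realDomainType) (p : nat) (w x : 'I_p -> R) : R :=
  \sum_(i < p) w i * nth 0 (sorted_abs x) i.

(* nat-indexed access to a vector (0 outside range; only used in range) *)
Definition vat (R : realDomainType) (p : nat) (w : 'I_p -> R) (k : nat) : R :=
  if insub k is Some o then w o else 0.

(* the consecutive gaps w_l - w_{l+1}, l = 1..p-1 (0-based: l = 0..p-2) *)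
Definition gaps (R : realDomainType) (p : nat) (w : 'I_p -> R) : seq R :=
  [seq vat w l - vat w l.+1 | l <- iota 0 p.-1].

(* Delta = min of the gaps (meaningful when p >= 2, i.e. gaps nonempty) *)
Definition minGap (R : realDomainType) (p : nat) (w : 'I_p -> R) : R :=
  foldr Num.min (head 0 (gaps w)) (gaps w).

(* Main.v *)
Require Import Defs.
From HB Require Import structures.
From mathcomp Require Import all_boot all_order all_algebra all_fingroup.
From mathcomp Require Import ring lra zify.
From Stdlib Require Import Lia.
Import Order.TTheory GRing.Theory Num.Theory.
Local Open Scope ring_scope.
Set Implicit Arguments. Unset Strict Implicit.

Lemma swap_step (R : realDomainType) (p : nat) (a w : 'I_p -> R)
  (ha : forall l m : 'I_p, (l <= m)%N -> a m <= a l)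
  (hw : forall l m : 'I_p, (l <= m)%N -> w m <= w l)
  (t : 'S_p) (n m' : 'I_p) (hnm : (n <= m')%N) (htn : (n <= t n)%N) (hm' : t m' = n) :
  \sum_m w m * a (t m) <= \sum_m w m * a ((tperm n m' * t)%g m).
Proof.
case: (eqVneq n m') => [<-|nm].
  by rewrite tperm1 mul1g.
have nm' : m' != n by rewrite eq_sym.
rewrite (bigD1 n) // (bigD1 m') //=.
rewrite [X in (_ <= X)%R](bigD1 n) // [X in (_ <= _ + X)%R](bigD1 m') //=.
rewrite !permM tpermL tpermR hm' !addrA lerD //.
  have h1 := hw _ _ hnm. have h2 := ha _ _ htn.
  have : 0 <= (w n - w m') * (a n - a (t n)) by apply: mulr_ge0; rewrite subr_ge0.
  move=> h; nra.
rewrite le_eqVlt; apply/orP; left; apply/eqP; apply: eq_bigr => k /andP [kn km]; rewrite permM tpermD // eq_sym //.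
Qed.

Lemma rearr (R : realDomainType) (p : nat) (a w : 'I_p -> R)
  (ha : forall l m : 'I_p, (l <= m)%N -> a m <= a l)
  (hw : forall l m : 'I_p, (l <= m)%N -> w m <= w l) (t : 'S_p) :
  \sum_m w m * a (t m) <= \sum_m w m * a m.
Proof.
suff H : forall k (t : 'S_p), (forall m : 'I_p, (m < p - k)%N -> t m = m) ->
  \sum_m w m * a (t m) <= \sum_m w m * a m.
  by apply: (H p) => m; rewrite subnn.
elim=> [|k IH] {}t ht.
  rewrite le_eqVlt; apply/orP; left; apply/eqP; apply: eq_bigr => m _; have -> : t m = m by apply: ht; rewrite subn0.
  by [].
case: (leqP p k) => pk.
  apply: IH => m; have -> : (p - k = 0)%N by apply/eqP; rewrite subn_eq0.
  by [].
have np : (p - k.+1 < p)%N by rewrite subnSK //; lia.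
set n := Ordinal np.
set m' := (t^-1)%g n.
have hm' : t m' = n by rewrite /m' permKV.
have fixlt : forall m : 'I_p, (m < n)%N -> t m = m by [].
have hnm : (n <= m')%N.
  rewrite leqNgt; apply/negP => lt; have := fixlt _ lt; rewrite hm' => E.
  by move: lt; rewrite -E ltnn.
have htn : (n <= t n)%N.
  rewrite leqNgt; apply/negP => lt; have := fixlt _ lt => E.
  by move/perm_inj: E => E; move: lt; rewrite E ltnn.
apply: le_trans (swap_step ha hw hnm htn hm') _.
apply: IH => m hm; rewrite permM.
case: (ltnP m n) => mn.
  have mn' : m != n by rewrite neq_ltn mn.
  have mm' : m != m'.
    apply/eqP => E; have := fixlt _ mn; rewrite E hm' => E2.
    by move: mn; rewrite E E2 ltnn.
  by rewrite tpermD 1?eq_sym // fixlt.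
have -> : m = n by apply/val_inj; rewrite /= ; move: hm mn; rewrite /=; lia.
by rewrite tpermL.
Qed.

Lemma size_sorted_abs (R : realDomainType) (p : nat) (x : 'I_p -> R) :
  size (sorted_abs x) = p.
Proof. by rewrite /sorted_abs size_sort size_map size_enum_ord. Qed.

Lemma sorted_abs_noninc (R : realDomainType) (p : nat) (x : 'I_p -> R) (l m : 'I_p) :
  (l <= m)%N -> nth 0 (sorted_abs x) m <= nth 0 (sorted_abs x) l.
Proof.
move=> lm.
have tr : transitive (fun a b : R => b <= a).
  by move=> a b c /= h1 h2; apply: le_trans h2 h1.
have := @sorted_leq_nth _ _ tr (fun a => lexx a) 0 (sorted_abs x).
apply.
- apply: sort_sorted => a b /=; exact: le_total.
- by rewrite inE size_sorted_abs.
- by rewrite inE size_sorted_abs.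
- exact: lm.
Qed.

Lemma sorted_abs_perm (R : realDomainType) (p : nat) (x : 'I_p -> R) :
  exists s : 'S_p, forall k, `|x k| = nth 0 (sorted_abs x) (s k).
Proof.
have E : perm_eq [seq `|x k| | k <- enum 'I_p] (Tuple (introT eqP (size_sorted_abs x))).
  by rewrite /= perm_sym /sorted_abs perm_sort.
case/tuple_permP: E => s hs; exists s => k.
have := congr1 (fun t => nth 0 t k) hs.
rewrite (nth_map k) ?size_enum_ord // nth_ord_enum => ->.
by rewrite -!tnth_nth tnth_mktuple (tnth_nth 0).
Qed.

Lemma rearr2 (R : realDomainType) (p : nat) (a w : 'I_p -> R)
  (ha : forall l m : 'I_p, (l <= m)%N -> a m <= a l)
  (hw : forall l m : 'I_p, (l <= m)%N -> w m <= w l) (s t : 'S_p) :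
  \sum_k w (t k) * a (s k) <= \sum_m w m * a m.
Proof.
rewrite (reindex_inj (@perm_inj _ (s^-1)%g)) /=.
under eq_bigr => k _ do rewrite permKV mulrC.
under [X in (_ <= X)%R]eq_bigr => k _ do rewrite mulrC.
apply: le_trans (rearr hw ha (s^-1 * t)%g).
rewrite le_eqVlt; apply/orP; left; apply/eqP; apply: eq_bigr => k _; by rewrite permM.
Qed.

Lemma foldr_min_le (R : realDomainType) (s : seq R) h y :
  y \in s -> foldr Num.min h s <= y.
Proof.
elim: s => [|c s IH] //=; rewrite inE => /orP [/eqP ->|ys].
  by rewrite ge_min lexx.
by rewrite ge_min IH ?orbT.
Qed.

Lemma gap_le (R : realDomainType) (p : nat) (w : 'I_p -> R)
  (hw : forall l m : 'I_p, (l <= m)%N -> w m <= w l) (l m : 'I_p) :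
  (l < m)%N -> minGap w <= w l - w m.
Proof.
move=> lm.
have l1p : (l.+1 < p)%N by apply: leq_ltn_trans lm (ltn_ord m).
have hmem : vat w l - vat w l.+1 \in gaps w.
  apply/mapP; exists (nat_of_ord l) => //; rewrite mem_iota /=; lia.
apply: le_trans (foldr_min_le _ hmem) _.
rewrite /vat.
case: insubP => [o _ ho|]; last by rewrite ltn_ord.
have -> : o = l by apply: val_inj.
case: insubP => [o' _ ho'|]; last by rewrite l1p.
rewrite lerD2l lerN2; apply: hw; rewrite ho'; exact: lm.
Qed.

Theorem lemma1 (R : realFieldType) (p : nat) (x w : 'I_p -> R) (i j : 'I_p)
    (eps : R)
    (hx : forall k, 0 <= x k)
    (hij : x j < x i)
    (heps0 : 0 < eps) (heps1 : eps < (x i - x j) / 2)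
    (hw : forall l m : 'I_p, (l <= m)%N -> w m <= w l)
    (hw0 : forall l, 0 <= w l) :
  let z := fun k : 'I_p => if k == i then x i - eps
                           else if k == j then x j + eps else x k in
  Omega w x - Omega w z >= minGap w * eps.
Proof.
cbv zeta; set z := (fun k : 'I_p => if k == i then _ else _).
have ij : i != j by apply/eqP => E; move: hij; rewrite E ltxx.
have zi : z i = x i - eps by rewrite /z eqxx.
have zj : z j = x j + eps by rewrite /z eq_sym (negbTE ij) eqxx.
have hxj := hx j.
have zge : forall k, 0 <= z k.
  move=> k; rewrite /z; case: ifP => _; first lra.
  case: ifP => _; [lra | exact: hx].
have zij : z j < z i by rewrite zi zj; lra.
case: (sorted_abs_perm x) => sx hsx; case: (sorted_abs_perm z) => sz hsz.
set a := fun m : 'I_p => nth 0 (sorted_abs x) m.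
set b := fun m : 'I_p => nth 0 (sorted_abs z) m.
have OZ : Omega w z = \sum_k w (sz k) * z k.
  rewrite /Omega (reindex_inj (@perm_inj _ sz)) /=.
  by apply: eq_bigr => k _; rewrite -hsz ger0_norm.
have OX : \sum_k w (sz k) * x k <= Omega w x.
  rewrite /Omega.
  have -> : \sum_k w (sz k) * x k = \sum_k w (sz k) * a (sx k).
    by apply: eq_bigr => k _; rewrite /a -hsx ger0_norm.
  apply: (rearr2 (a := a)) => // l m lm; exact: sorted_abs_noninc.
have D : \sum_k w (sz k) * x k - \sum_k w (sz k) * z k = (w (sz i) - w (sz j)) * eps.
  have ji : j != i by rewrite eq_sym.
  rewrite -sumrB (bigD1 i) //= (bigD1 j) //= big1 ?addr0.
    rewrite zi zj; ring.
  move=> k /andP [ki kj]; rewrite /z (negbTE ki) (negbTE kj); ring.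
have sij : (sz i < sz j)%N.
  rewrite ltnNge; apply/negP => le.
  have := sorted_abs_noninc z le; rewrite -!hsz !ger0_norm //; lra.
have G := gap_le hw sij.
have : minGap w * eps <= (w (sz i) - w (sz j)) * eps by rewrite ler_wpM2r // ltW.
rewrite -D; lra.
Qed.
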